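(* Let $\mathcal M$ be a full subcategory of $\mathrm{Mod}\text{-}R$ closed under submodules. For a module $M\in\mathcal M$ the following are equivalent: (1) there is a left almost split morphism $f:M\to\bar M$ in $\mathcal M$ that is not a monomorphism; (2) there is a left almost split morphism $g:M\to\bar M$ in $\mathcal M$ that is an epimorphism. Moreover, a strong left almost split morphism in $\mathcal M$ is either a monomorphism or an epimorphism.
   Context: $R$ is a unital associative ring and $\mathrm{Mod}\text{-}R$ the category of right $R$-modules. In a full subcategory $\mathcal M$, a morphism $f:X\to Y$ is left almost split if it is not a split monomorphism and every $g:X\to Z$ in $\mathcal M$ that is not a split monomorphism factors as $g=hf$ for some $h:Y\to Z$ in $\mathcal M$; it is strong left almost split if this $h$ is unique for every such $g$. *)

(* Defs.v *)
From HB Require Import structures.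
From mathcomp Require Import all_boot all_algebra.
Set Implicit Arguments. Unset Strict Implicit. Unset Printing Implicit Defensive.
Import GRing.Theory.
Local Open Scope ring_scope.

(* Right R-modules are modelled as left modules over the converse ring R^c. A full subcategory
   of Mod-R is given by a predicate Mc on modules (all linear maps between
   its objects are morphisms). *)

Section AlmostSplit.
Variable R : pzRingType.
Notation modR := (lmodType R^c).

Definition surj (X Y : Type) (f : X -> Y) := forall y, exists x, f x = y.

Definition split_mono (X Y : modR) (f : {linear X -> Y}) : Prop :=
  exists r : {linear Y -> X}, forall x, r (f x) = x.

Definition closed_under_submodules (Mc : modR -> Prop) : Prop :=
  forall (N M : modR) (i : {linear N -> M}), injective i -> Mc M -> Mc N.

Definition left_almost_split (Mc : modR -> Prop) (X Y : modR)
    (f : {linear X -> Y}) : Prop :=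
  ~ split_mono f /\
  forall (Z : modR), Mc Z -> forall g : {linear X -> Z}, ~ split_mono g ->
    exists h : {linear Y -> Z}, forall x, g x = h (f x).

Definition strong_left_almost_split (Mc : modR -> Prop) (X Y : modR)
    (f : {linear X -> Y}) : Prop :=
  left_almost_split Mc f /\
  forall (Z : modR), Mc Z -> forall g : {linear X -> Z}, ~ split_mono g ->
    forall h h' : {linear Y -> Z},
      (forall x, g x = h (f x)) -> (forall x, g x = h' (f x)) ->
      forall y, h y = h' y.
End AlmostSplit.

(* Main.v *)
Require Import Defs.
From HB Require Import structures.
From mathcomp Require Import all_boot all_algebra.
From Stdlib Require Import ClassicalEpsilon.
Set Implicit Arguments. Unset Strict Implicit. Unset Printing Implicit Defensive.
Import GRing.Theory.
Local Open Scope ring_scope.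

Record subm (R : pzRingType) (V : lmodType R) (P : pred V) (hP : subsemimod_closed P) : Type :=
  Subm { subval : V; _ : P subval }.
Section Sub.
Variables (R : pzRingType) (V : lmodType R) (P : pred V) (hP : subsemimod_closed P).
HB.instance Definition _ := [isSub for @subval R V P hP].
HB.instance Definition _ := [Choice of subm hP by <:].
HB.instance Definition _ := GRing.SubChoice_isSubLmodule.Build R V P (subm hP) hP.
Definition incl (x : subm hP) : V := subval x.
Lemma incl_lin : linear incl.
Proof. by []. Qed.
HB.instance Definition _ := GRing.isLinear.Build R (subm hP) V _ incl incl_lin.
Lemma incl_inj : injective incl.
Proof. exact: val_inj. Qed.
End Sub.

Section Img.
Variables (R : pzRingType) (X Y : lmodType R) (f : {linear X -> Y}).
Definition imP (y : Y) : bool :=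
  if excluded_middle_informative (exists x, f x = y) then true else false.
Lemma imPP y : reflect (exists x, f x = y) (imP y).
Proof.
rewrite /imP; case: excluded_middle_informative => h; constructor => //.
Qed.
Lemma imP_closed : subsemimod_closed imP.
Proof.
apply: GRing.submod_closed_semi; split.
  by apply/imPP; exists 0; rewrite linear0.
move=> a u v /imPP [x <-] /imPP [x' <-]; apply/imPP; exists (a *: x + x').
by rewrite linearD linearZ.
Qed.
Definition Im := subm imP_closed.
Definition cores (x : X) : Im := @Subm _ _ _ imP_closed (f x) (introT (imPP _) (ex_intro _ x erefl)).
Lemma cores_lin : linear cores.
Proof. by move=> a x y; apply: val_inj; rewrite /= linearD linearZ. Qed.
HB.instance Definition _ := GRing.isLinear.Build R X Im _ cores cores_lin.
Lemma incl_cores x : incl (cores x) = f x.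
Proof. by []. Qed.
End Img.

Section Inv.
Variables (R : pzRingType) (X Y : lmodType R) (g : {linear X -> Y}).
Hypotheses (ginj : injective g) (gsurj : surj g).
Definition ginv (y : Y) : X := let _ := ginj in proj1_sig (constructive_indefinite_description _ (gsurj y)).
Lemma ginvK y : g (ginv y) = y.
Proof. by rewrite /ginv; case: constructive_indefinite_description. Qed.
Lemma ginv_lin : linear ginv.
Proof. by move=> a x y; apply: ginj; rewrite linearD linearZ !ginvK. Qed.
HB.instance Definition _ := GRing.isLinear.Build R Y X _ ginv ginv_lin.
Lemma ginv_g x : ginv (g x) = x.
Proof. by apply: ginj; rewrite ginvK. Qed.
End Inv.

Lemma split_mono_inj (R : pzRingType) (X Y : lmodType R^c) (f : {linear X -> Y}) :
  split_mono f -> injective f.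
Proof. by case=> r hr x y e; rewrite -(hr x) -(hr y) e. Qed.

Theorem lemma4p3 (R : pzRingType) (Mc : lmodType R^c -> Prop) :
  closed_under_submodules Mc ->
  (forall M : lmodType R^c, Mc M ->
     ((exists (Mb : lmodType R^c) (f : {linear M -> Mb}),
          Mc Mb /\ left_almost_split Mc f /\ ~ injective f) <->
      (exists (Mb : lmodType R^c) (g : {linear M -> Mb}),
          Mc Mb /\ left_almost_split Mc g /\ surj g))) /\
  (forall (X Y : lmodType R^c) (f : {linear X -> Y}),
     Mc X -> Mc Y -> strong_left_almost_split Mc f ->
     injective f \/ surj f).
Proof.
move=> cl; split.
  move=> M _; split.
    case=> Mb [f [hMb [[nsf las] ninj]]].
    exists (Im f), (cores f); split; first by apply: (cl (Im f) Mb ((@incl _ _ _ (imP_closed f)) : {linear Im f -> Mb})) => //; exact: incl_inj.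
    split; last by move=> [y py]; case/imPP: (py) => x hx; exists x; apply: val_inj.
    split.
      by move=> /split_mono_inj hi; apply: ninj => x y e; apply: hi; apply: val_inj.
    move=> Z hZ g ng; case: (las Z hZ g ng) => h hh.
    exists (h \o (@incl _ _ _ (imP_closed f))) => x; by rewrite hh.
  case=> Mb [g [hMb [[nsg las] gs]]].
  exists Mb, g; split=> //; split=> //.
  move=> gi; apply: nsg; exists (ginv gi gs); exact: (ginv_g gi).
move=> X Y f hX hY [[nsf las] uniq].
case: (classic (injective f)) => [|ni]; first by left.
right.
have hIm : Mc (Im f) by apply: (cl (Im f) Y ((@incl _ _ _ (imP_closed f)) : {linear Im f -> Y})) => //; exact: incl_inj.
have nsc : ~ split_mono (cores f).
  by move=> /split_mono_inj hi; apply: ni => x y e; apply: hi; apply: val_inj.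
case: (las _ hIm _ nsc) => h hh.
have := uniq Y hY f nsf ((@incl _ _ _ (imP_closed f)) \o h) idfun.
move=> /(_ _ _) H.
have E : forall y, (@incl _ _ _ (imP_closed f)) (h y) = y.
  apply: H => x //=; by rewrite -hh.
move=> y; rewrite -(E y); case: (h y) => z pz; case/imPP: (pz) => x hx; by exists x.
Qed.
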